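(* Let $\mathcal C$ be an additive strict symmetric monoidal category and let $(L,\ell)$ be a Lie algebra in $\mathcal C$. If $L$ is derived nilpotent, then $L$ is solvable.
   Context: Standing conventions: $\mathcal C$ is an additive symmetric monoidal category (taken strict), with symmetric braiding $c$ (so $c_{V,U}\circ c_{U,V}=\mathrm{id}_{U\otimes V}$); the tensor product is additive in each argument. For an object $U$ put $c^{(n)}_U := c_{U^{\otimes(n-1)},U}\in\mathrm{End}(U^{\otimes n})$. For $h\in\mathrm{Hom}(U\otimes U,U)$ put $h^{(2)}:=h$ and $h^{(n)}:=h\circ(\mathrm{id}_U\otimes h^{(n-1)})\in\mathrm{Hom}(U^{\otimes n},U)$ for $n>2$. A Lie algebra in $\mathcal C$ is a pair $(L,\ell)$ with $\ell\in\mathrm{Hom}(L\otimes L,L)$ satisfying antisymmetry $\ell\circ(\mathrm{id}_{L\otimes L}+c_{L,L})=0$ and the Jacobi identity $\ell^{(3)}\circ[\mathrm{id}_{L^{\otimes 3}}+c^{(3)}_L+(c^{(3)}_L)^2]=0$. Define $\ell^{[2]}:=\ell$ and $\ell^{[n]}:=\ell\circ(\ell^{[n-1]}\otimes\ell^{[n-1]})\in\mathrm{Hom}(L^{\otimes 2^{n-1}},L)$ for $n>2$. $L$ is solvable iff $\ell^{[n]}=0$ for sufficiently large $n$; $L$ is derived nilpotent iff $\ell^{(n)}\circ\ell^{\otimes n}=0$ for sufficiently large $n$. *)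

(* Defs.v *)
From HB Require Import structures.
From mathcomp Require Import all_boot all_order all_algebra.
Set Implicit Arguments. Unset Strict Implicit. Unset Printing Implicit Defensive.
Import GRing.Theory.
Local Open Scope ring_scope.

(* Transport of an identity along an equality of objects (used to express
   strictness: e.g. U (x) (V (x) W) = (U (x) V) (x) W as objects). *)
Definition castH (T : Type) (H : T -> T -> Type) (i : forall X, H X X)
  (X Y : T) (e : X = Y) : H X Y :=
  match e in _ = Y0 return H X Y0 with erefl => i X end.
Arguments castH {T} H i {X Y} e.

Record AddStrictSymMonCat := {
  Obj : Type;
  Mor : Obj -> Obj -> zmodType;
  idm : forall U, Mor U U;
  mcomp : forall U V W, Mor V W -> Mor U V -> Mor U W;
  comp_assoc : forall U V W X (f : Mor W X) (g : Mor V W) (h : Mor U V),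
      mcomp f (mcomp g h) = mcomp (mcomp f g) h;
  comp_idl : forall U V (f : Mor U V), mcomp (idm V) f = f;
  comp_idr : forall U V (f : Mor U V), mcomp f (idm U) = f;
  comp_addl : forall U V W (f f' : Mor V W) (g : Mor U V),
      mcomp (f + f') g = mcomp f g + mcomp f' g;
  comp_addr : forall U V W (f : Mor V W) (g g' : Mor U V),
      mcomp f (g + g') = mcomp f g + mcomp f g';
  zob : Obj;
  zob_id : idm zob = 0;
  bprod : Obj -> Obj -> Obj;
  bin1 : forall U V, Mor U (bprod U V);
  bin2 : forall U V, Mor V (bprod U V);
  bpr1 : forall U V, Mor (bprod U V) U;
  bpr2 : forall U V, Mor (bprod U V) V;
  bp11 : forall U V, mcomp (bpr1 U V) (bin1 U V) = idm U;
  bp22 : forall U V, mcomp (bpr2 U V) (bin2 U V) = idm V;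
  bp12 : forall U V, mcomp (bpr1 U V) (bin2 U V) = 0;
  bp21 : forall U V, mcomp (bpr2 U V) (bin1 U V) = 0;
  bpsum : forall U V,
      mcomp (bin1 U V) (bpr1 U V) + mcomp (bin2 U V) (bpr2 U V) = idm (bprod U V);
  tens : Obj -> Obj -> Obj;
  unitO : Obj;
  tensm : forall U U' V V', Mor U U' -> Mor V V' -> Mor (tens U V) (tens U' V');
  tensm_id : forall U V, tensm (idm U) (idm V) = idm (tens U V);
  tensm_comp : forall U U' U'' V V' V'' (f : Mor U' U'') (f' : Mor U U')
      (g : Mor V' V'') (g' : Mor V V'),
      tensm (mcomp f f') (mcomp g g') = mcomp (tensm f g) (tensm f' g');
  tensm_addl : forall U U' V V' (f f' : Mor U U') (g : Mor V V'),
      tensm (f + f') g = tensm f g + tensm f' g;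
  tensm_addr : forall U U' V V' (f : Mor U U') (g g' : Mor V V'),
      tensm f (g + g') = tensm f g + tensm f g';
  tassoc : forall U V W, tens U (tens V W) = tens (tens U V) W;
  tunitl : forall U, tens unitO U = U;
  tunitr : forall U, tens U unitO = U;
  tensm_assoc : forall U U' V V' W W' (f : Mor U U') (g : Mor V V') (h : Mor W W'),
      mcomp (castH (fun X Y => Mor X Y) idm (tassoc U' V' W')) (tensm f (tensm g h))
      = mcomp (tensm (tensm f g) h) (castH (fun X Y => Mor X Y) idm (tassoc U V W));
  tensm_unitl : forall U V (f : Mor U V),
      mcomp (castH (fun X Y => Mor X Y) idm (tunitl V)) (tensm (idm unitO) f)
      = mcomp f (castH (fun X Y => Mor X Y) idm (tunitl U));
  tensm_unitr : forall U V (f : Mor U V),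
      mcomp (castH (fun X Y => Mor X Y) idm (tunitr V)) (tensm f (idm unitO))
      = mcomp f (castH (fun X Y => Mor X Y) idm (tunitr U));
  braid : forall U V, Mor (tens U V) (tens V U);
  braid_nat : forall U U' V V' (f : Mor U U') (g : Mor V V'),
      mcomp (braid U' V') (tensm f g) = mcomp (tensm g f) (braid U V);
  braid_sym : forall U V, mcomp (braid V U) (braid U V) = idm (tens U V);
  braid_hex : forall U V W,
      braid (tens U V) W =
      mcomp (castH (fun X Y => Mor X Y) idm (esym (tassoc W U V)))
      (mcomp (tensm (braid U W) (idm V))
      (mcomp (castH (fun X Y => Mor X Y) idm (tassoc U W V))
      (mcomp (tensm (idm U) (braid V W))
            (castH (fun X Y => Mor X Y) idm (esym (tassoc U V W))))))
}.

Arguments Obj : clear implicits.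
Arguments Mor : clear implicits.
Arguments idm {_} U.
Arguments mcomp {_ U V W} f g.
Arguments tens {_} U V.
Arguments tensm {_ U U' V V'} f g.
Arguments braid {_} U V.
Arguments tassoc {_} U V W.

Section LieDefs.
Variable C : AddStrictSymMonCat.

(* tpow U k = U^{(x)(k+1)} = U (x) (U (x) ( ... (x) U)) *)
Fixpoint tpow (U : Obj C) (k : nat) : Obj C :=
  match k with 0 => U | k'.+1 => tens U (tpow U k') end.

Fixpoint mpow (U V : Obj C) (f : Mor C U V) (k : nat) : Mor C (tpow U k) (tpow V k) :=
  match k with 0 => f | k'.+1 => tensm f (mpow f k') end.

(* hpow h k = h^{(k+2)} : U^{(x)(k+2)} -> U, with h^{(2)} = h and
   h^{(n)} = h o (id (x) h^{(n-1)}). *)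
Fixpoint hpow (U : Obj C) (h : Mor C (tens U U) U) (k : nat) : Mor C (tpow U k.+1) U :=
  match k with 0 => h | k'.+1 => mcomp h (tensm (idm U) (hpow h k')) end.

(* c^{(3)}_U = c_{U^{(x)2},U} in End(U^{(x)3}) (precomposed with the strict
   identification U (x) (U (x) U) = (U (x) U) (x) U). *)
Definition cyc3 (U : Obj C) : Mor C (tpow U 2) (tpow U 2) :=
  mcomp (braid (tens U U) U) (castH (fun X Y => Mor C X Y) (@idm C) (tassoc U U U)).

Definition is_Lie (L : Obj C) (l : Mor C (tens L L) L) : Prop :=
  mcomp l (idm (tens L L) + braid L L) = 0 /\
  mcomp (hpow l 1) (idm (tpow L 2) + cyc3 L + mcomp (cyc3 L) (cyc3 L)) = 0.

Fixpoint bdom (L : Obj C) (k : nat) : Obj C :=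
  match k with 0 => tens L L | k'.+1 => tens (bdom L k') (bdom L k') end.

(* lbr l k = l^{[k+2]} *)
Fixpoint lbr (L : Obj C) (l : Mor C (tens L L) L) (k : nat) : Mor C (bdom L k) L :=
  match k with 0 => l | k'.+1 => mcomp l (tensm (lbr l k') (lbr l k')) end.

Definition solvable_Lie (L : Obj C) (l : Mor C (tens L L) L) : Prop :=
  exists N : nat, forall k : nat, (N <= k)%N -> lbr l k = 0.

(* derived nilpotent: l^{(n)} o l^{(x) n} = 0 for all sufficiently large n
   (index k corresponds to n = k+2) *)
Definition derived_nilpotent (L : Obj C) (l : Mor C (tens L L) L) : Prop :=
  exists N : nat, forall k : nat, (N <= k)%N -> mcomp (hpow l k) (mpow l k.+1) = 0.

End LieDefs.

(* Main.v *)
Require Import Defs.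
From HB Require Import structures.
From mathcomp Require Import all_boot all_order all_algebra.
From mathcomp Require Import zify.
Set Implicit Arguments. Unset Strict Implicit. Unset Printing Implicit Defensive.
Import GRing.Theory.
Local Open Scope ring_scope.

Lemma comp0r (C : AddStrictSymMonCat) (U V W : Obj C) (f : Mor C V W) :
  mcomp f (0 : Mor C U V) = 0.
Proof.
have H := comp_addr f (0 : Mor C U V) 0.
rewrite addr0 in H.
by move: H; rewrite -{1}(addr0 (mcomp f 0)) => /addrI.
Qed.

Lemma comp0l (C : AddStrictSymMonCat) (U V W : Obj C) (g : Mor C U V) :
  mcomp (0 : Mor C V W) g = 0.
Proof.
have H := comp_addl (0 : Mor C V W) 0 g.
rewrite addr0 in H.
by move: H; rewrite -{1}(addr0 (mcomp 0 g)) => /addrI.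
Qed.

Lemma compNr (C : AddStrictSymMonCat) (U V W : Obj C) (f : Mor C V W) (g : Mor C U V) :
  mcomp f (- g) = - mcomp f g.
Proof.
have H := comp_addr f g (- g).
rewrite addrN comp0r in H.
apply/eqP; rewrite -addr_eq0 addrC; apply/eqP; by rewrite -H.
Qed.

Lemma tensm0r (C : AddStrictSymMonCat) (U U' V V' : Obj C) (f : Mor C U U') :
  tensm f (0 : Mor C V V') = 0.
Proof.
have H := tensm_addr f (0 : Mor C V V') 0.
rewrite addr0 in H.
by move: H; rewrite -{1}(addr0 (tensm f 0)) => /addrI.
Qed.

Lemma tensmNr (C : AddStrictSymMonCat) (U U' V V' : Obj C) (f : Mor C U U')
  (g : Mor C V V') : tensm f (- g) = - tensm f g.
Proof.
have H := tensm_addr f g (- g).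
rewrite addrN tensm0r in H.
apply/eqP; rewrite -addr_eq0 addrC; apply/eqP; by rewrite -H.
Qed.

Fixpoint RR (C : AddStrictSymMonCat) (L : Obj C) (l : Mor C (tens L L) L) (n : nat)
  : Mor C (tpow (tens L L) n) L :=
  match n with 0 => l | n'.+1 => mcomp l (tensm l (RR l n')) end.

Lemma RR_hpow (C : AddStrictSymMonCat) (L : Obj C) (l : Mor C (tens L L) L) n :
  RR l n.+1 = mcomp (hpow l n) (mpow l n.+1).
Proof.
elim: n => [|n IH] //.
rewrite -[RR l n.+2]/(mcomp l (tensm l (RR l n.+1))) IH /= -comp_assoc -tensm_comp comp_idl.
done.
Qed.

Definition br (C : AddStrictSymMonCat) (L : Obj C) (l : Mor C (tens L L) L)
  (A B : Obj C) (x : Mor C A L) (y : Mor C B L) : Mor C (tens A B) L :=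
  mcomp l (tensm x y).

Inductive Gam (C : AddStrictSymMonCat) (L : Obj C) (l : Mor C (tens L L) L)
  : nat -> forall X : Obj C, Mor C X L -> Prop :=
| Gb n X (g : Mor C X (tpow (tens L L) n)) : Gam l n (mcomp (RR l n) g)
| Gadd n X (f1 f2 : Mor C X L) : Gam l n f1 -> Gam l n f2 -> Gam l n (f1 + f2).

Lemma Gam_comp (C : AddStrictSymMonCat) (L : Obj C) (l : Mor C (tens L L) L)
  n X (f : Mor C X L) : Gam l n f -> forall Y (h : Mor C Y X), Gam l n (mcomp f h).
Proof.
elim=> {n X f} [n X g|n X f1 f2 _ IH1 _ IH2] Y h.
  by rewrite -comp_assoc; apply: Gb.
by rewrite comp_addl; apply: Gadd.
Qed.

Lemma Gam_opp (C : AddStrictSymMonCat) (L : Obj C) (l : Mor C (tens L L) L)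
  n X (f : Mor C X L) : Gam l n f -> Gam l n (- f).
Proof.
move=> H; have := Gam_comp H (- idm X).
by rewrite compNr comp_idr.
Qed.

Lemma anti (C : AddStrictSymMonCat) (L : Obj C) (l : Mor C (tens L L) L)
  (Ha : mcomp l (idm (tens L L) + braid L L) = 0)
  (A B : Obj C) (x : Mor C A L) (y : Mor C B L) :
  br l x y = - mcomp (br l y x) (braid A B).
Proof.
rewrite /br comp_addr comp_idr in Ha.
have H : mcomp (l + mcomp l (braid L L)) (tensm x y) = 0 by rewrite Ha comp0l.
rewrite comp_addl -comp_assoc braid_nat comp_assoc in H.
apply/eqP; rewrite -addr_eq0; apply/eqP; exact H.
Qed.

Lemma Gam_swap (C : AddStrictSymMonCat) (L : Obj C) (l : Mor C (tens L L) L)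
  (Ha : mcomp l (idm (tens L L) + braid L L) = 0)
  n (A B : Obj C) (x : Mor C A L) (y : Mor C B L) :
  Gam l n (br l y x) -> Gam l n (br l x y).
Proof.
move=> H; rewrite (anti Ha); apply: Gam_opp; exact: Gam_comp.
Qed.

Definition sig3 (C : AddStrictSymMonCat) (A B D : Obj C) :
  Mor C (tens A (tens B D)) (tens D (tens A B)) :=
  mcomp (braid (tens A B) D) (castH (fun X Y => Mor C X Y) (@idm C) (tassoc A B D)).

Lemma cyc_nat (C : AddStrictSymMonCat) (L A B D : Obj C)
  (x : Mor C A L) (y : Mor C B L) (z : Mor C D L) :
  mcomp (cyc3 L) (tensm x (tensm y z)) = mcomp (tensm z (tensm x y)) (sig3 A B D).
Proof.
rewrite /cyc3 /sig3 -comp_assoc tensm_assoc comp_assoc braid_nat -comp_assoc.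
done.
Qed.

Lemma jac (C : AddStrictSymMonCat) (L : Obj C) (l : Mor C (tens L L) L)
  (Hj : mcomp (hpow l 1) (idm (tpow L 2) + cyc3 L + mcomp (cyc3 L) (cyc3 L)) = 0)
  (A B D : Obj C) (x : Mor C A L) (y : Mor C B L) (z : Mor C D L) :
  br l x (br l y z) + mcomp (br l z (br l x y)) (sig3 A B D)
  + mcomp (br l y (br l z x)) (mcomp (sig3 D A B) (sig3 A B D)) = 0.
Proof.
have H : mcomp (mcomp (hpow l 1) (idm (tpow L 2) + cyc3 L + mcomp (cyc3 L) (cyc3 L)))
   (tensm x (tensm y z)) = 0 by rewrite Hj comp0l.
rewrite -comp_assoc !comp_addl comp_idl -comp_assoc !cyc_nat !comp_addr in H.
rewrite [mcomp (cyc3 L) _]comp_assoc cyc_nat in H.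
have E : forall A' B' D' (x' : Mor C A' L) (y' : Mor C B' L) (z' : Mor C D' L),
    mcomp (hpow l 1) (tensm x' (tensm y' z')) = br l x' (br l y' z').
  move=> A' B' D' x' y' z'; rewrite /= /br -comp_assoc -tensm_comp comp_idl.
  done.
rewrite !comp_assoc !E in H.
by rewrite /sig3 !comp_assoc.
Qed.

Lemma Gl (C : AddStrictSymMonCat) (L : Obj C) (l : Mor C (tens L L) L)
  n X (f : Mor C X L) : Gam l n f -> Gam l n.+1 (br l l f).
Proof.
elim=> {n X f} [n X g|n X f1 f2 _ IH1 _ IH2].
  have -> : br l l (mcomp (RR l n) g) = mcomp (RR l n.+1) (tensm (idm _) g).
    by rewrite /br /= -comp_assoc -tensm_comp comp_idr.
  exact: Gb.
by rewrite /br tensm_addr comp_addr; apply: Gadd.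
Qed.

Lemma K00 (C : AddStrictSymMonCat) (L : Obj C) (l : Mor C (tens L L) L)
  (Ha : mcomp l (idm (tens L L) + braid L L) = 0)
  a X (f : Mor C X L) : Gam l a f -> Gam l a.+1 (br l f l).
Proof. move=> Hf; apply: (Gam_swap Ha); exact: Gl. Qed.

Lemma K0 (C : AddStrictSymMonCat) (L : Obj C) (l : Mor C (tens L L) L)
  (Ha : mcomp l (idm (tens L L) + braid L L) = 0)
  (Hj : mcomp (hpow l 1) (idm (tpow L 2) + cyc3 L + mcomp (cyc3 L) (cyc3 L)) = 0)
  b : forall a X (f : Mor C X L), Gam l a f -> Gam l (a + b).+1 (br l f (RR l b)).
Proof.
elim: b => [|c IH] a X f Hf.
  rewrite addn0; exact: K00.
have J := jac Hj f l (RR l c).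
have E : br l f (RR l c.+1) = br l f (br l l (RR l c)) by [].
rewrite E.
have -> : br l f (br l l (RR l c)) =
  - mcomp (br l (RR l c) (br l f l)) (sig3 X (tens L L) (tpow (tens L L) c))
  - mcomp (br l l (br l (RR l c) f))
      (mcomp (sig3 (tpow (tens L L) c) X (tens L L))
             (sig3 X (tens L L) (tpow (tens L L) c))).
  by move/eqP: J; rewrite -addrA addr_eq0 opprD => /eqP.
apply: Gadd; apply: Gam_opp; apply: Gam_comp.
  apply: (Gam_swap Ha).
  have -> : (a + c.+1).+1 = (a.+1 + c).+1 by rewrite addnS addSn.
  apply: IH; exact: K00.
have -> : (a + c.+1).+1 = (a + c).+2 by rewrite addnS.
apply: Gl; apply: (Gam_swap Ha); exact: IH.
Qed.

Lemma K (C : AddStrictSymMonCat) (L : Obj C) (l : Mor C (tens L L) L)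
  (Ha : mcomp l (idm (tens L L) + braid L L) = 0)
  (Hj : mcomp (hpow l 1) (idm (tpow L 2) + cyc3 L + mcomp (cyc3 L) (cyc3 L)) = 0)
  b Y (g : Mor C Y L) : Gam l b g ->
  forall a X (f : Mor C X L), Gam l a f -> Gam l (a + b).+1 (br l f g).
Proof.
elim=> {b Y g} [b Y q|b Y g1 g2 _ IH1 _ IH2] a X f Hf.
  have -> : br l f (mcomp (RR l b) q) = mcomp (br l f (RR l b)) (tensm (idm X) q).
    by rewrite /br -comp_assoc -tensm_comp comp_idr.
  apply: Gam_comp; exact: K0.
rewrite /br tensm_addr comp_addr; apply: Gadd; [exact: IH1|exact: IH2].
Qed.

Lemma Gam_van (C : AddStrictSymMonCat) (L : Obj C) (l : Mor C (tens L L) L) N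
  (HN : forall k, (N <= k)%N -> mcomp (hpow l k) (mpow l k.+1) = 0)
  n X (f : Mor C X L) : Gam l n f -> (N < n)%N -> f = 0.
Proof.
elim=> {n X f} [n X g|n X f1 f2 _ IH1 _ IH2] Hn.
  case: n g Hn => [|n] g Hn //.
  by rewrite RR_hpow HN // comp0l.
by rewrite IH1 // IH2 // addr0.
Qed.

Lemma Gam_lbr (C : AddStrictSymMonCat) (L : Obj C) (l : Mor C (tens L L) L)
  (Ha : mcomp l (idm (tens L L) + braid L L) = 0)
  (Hj : mcomp (hpow l 1) (idm (tpow L 2) + cyc3 L + mcomp (cyc3 L) (cyc3 L)) = 0)
  k : Gam l (2 ^ k).-1 (lbr l k).
Proof.
elim: k => [|k IH].
  have -> : lbr l 0 = mcomp (RR l 0) (idm _) by rewrite comp_idr.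
  exact: Gb.
have E : (2 ^ k.+1).-1 = ((2 ^ k).-1 + (2 ^ k).-1).+1.
  have Hm : (0 < 2 ^ k)%N by rewrite expn_gt0.
  rewrite (expnS 2 k); lia.
rewrite E; exact: K.
Qed.

Theorem mainTheorem1 (C : AddStrictSymMonCat) (L : Obj C) (l : Mor C (tens L L) L) :
  is_Lie l -> derived_nilpotent l -> solvable_Lie l.
Proof.
move=> [Ha Hj] [N HN]; exists N.+1 => k Hk.
apply: (Gam_van HN (Gam_lbr Ha Hj k)).
have := ltn_expl k (isT : 1 < 2)%N.
lia.
Qed.
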